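(* Let $B\ge 2$ and $\eta\in\mathbb{N}$. Then $\mathcal{H}_B(\gamma_B(\eta+1))\le\gamma_B(\eta)+4(B-1)^2$.
   Context: Fix an integer base $B \geq 2$. Every integer $x>0$ is written uniquely as $x=\sum_{i=0}^{L(x)-1} x_i B^i$ with digits $0 \le x_i \le B-1$ and $x_{L(x)-1}\neq 0$. Define $\mathcal{H}_B(x)=\sum_{i=0}^{L(x)-1} x_i^2$, $\mathcal{H}_B(0)=0$, $\mathcal{H}_B^0(x)=x$, $\mathcal{H}_B^{n}=\mathcal{H}_B\circ\mathcal{H}_B^{n-1}$. A positive integer $x$ is happy if $\mathcal{H}_B^n(x)=1$ for some $n\in\mathbb{N}$; its height is $\eta_B(x)=\min\{\alpha\in\mathbb{N}:\mathcal{H}_B^\alpha(x)=1\}$. For $n\in\mathbb{N}$, $\gamma_B(n)$ denotes the smallest happy number $x\ge 1$ with $\eta_B(x)=n$. *)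

(* Defs.v *)
From mathcomp Require Import all_boot.
Set Implicit Arguments. Unset Strict Implicit. Unset Printing Implicit Defensive.

(* Digit i of x in base B is (x %/ B^i) %% B.  For B >= 2, B^x > x, so all
   nonzero digits of x have index < x; hence summing over i < x covers all
   digits (and gives H_B(0) = 0). *)
Definition digit (B x i : nat) : nat := (x %/ B ^ i) %% B.

Definition HB (B x : nat) : nat := \sum_(i < x) (digit B x i) ^ 2.

Definition HBiter (B n x : nat) : nat := iter n (HB B) x.

Definition happy (B x : nat) : Prop := 0 < x /\ exists n, HBiter B n x = 1.

Definition has_height (B x n : nat) : Prop :=
  happy B x /\ HBiter B n x = 1 /\ (forall m, m < n -> HBiter B m x <> 1).

Definition is_gamma (B n x : nat) : Prop :=
  has_height B x n /\ (forall y, has_height B y n -> x <= y).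

(* Main.v *)
Require Import Defs.
From mathcomp Require Import all_boot all_order all_algebra.
From mathcomp Require Import zify ring.
Import GRing.Theory Num.Theory.

Definition sum4 (n : nat) := exists a b c d : nat, n = a^2 + b^2 + c^2 + d^2.

Lemma natz_sq (u : int) : Posz ((absz u ^ 2)%N) = (u ^+ 2)%R.
Proof. by rewrite PoszM abszE -expr2 real_normK ?num_real. Qed.

Lemma natz_sq' (n : nat) : Posz (n ^ 2) = ((Posz n) ^+ 2)%R.
Proof. by rewrite PoszM -expr2. Qed.

Section IntPart.
Local Open Scope ring_scope.

Lemma sum4_int (n : nat) (a b c d : int) :
  Posz n = a ^+ 2 + b ^+ 2 + c ^+ 2 + d ^+ 2 -> sum4 n.
Proof.
move=> H; exists (absz a), (absz b), (absz c), (absz d).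
suff: Posz n = Posz ((absz a)^2 + (absz b)^2 + (absz c)^2 + (absz d)^2)%N by case.
by rewrite !PoszD !natz_sq.
Qed.

Lemma sum4M m n : sum4 m -> sum4 n -> sum4 (m * n).
Proof.
case=> a [b [c [d ->]]]; case=> e [f [g [h ->]]].
set A := Posz a; set Bb := Posz b; set C := Posz c; set D := Posz d.
set E := Posz e; set F := Posz f; set G := Posz g; set H := Posz h.
apply: (@sum4_int _ (A*E+Bb*F+C*G+D*H) (A*F-Bb*E+C*H-D*G)
          (A*G-Bb*H-C*E+D*F) (A*H+Bb*G-C*F-D*E)).
rewrite PoszM !PoszD !natz_sq' -/A -/Bb -/C -/D -/E -/F -/G -/H.
ring.
Qed.

Lemma reduce4 (m : int) (P : nat) (a b c d e f g h : int) :
  m != 0 ->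
  a ^+ 2 + b ^+ 2 + c ^+ 2 + d ^+ 2 = m * Posz P ->
  e ^+ 2 + f ^+ 2 + g ^+ 2 + h ^+ 2 = m ->
  (m %| a - e)%Z -> (m %| b - f)%Z -> (m %| c - g)%Z -> (m %| d - h)%Z ->
  sum4 P.
Proof.
move=> m0 HS HT /dvdzP[x1 Ha] /dvdzP[x2 Hb] /dvdzP[x3 Hc] /dvdzP[x4 Hd].
have {Ha}Ha : a = e + x1 * m by rewrite -Ha; ring.
have {Hb}Hb : b = f + x2 * m by rewrite -Hb; ring.
have {Hc}Hc : c = g + x3 * m by rewrite -Hc; ring.
have {Hd}Hd : d = h + x4 * m by rewrite -Hd; ring.
apply: (@sum4_int P (1 + (e*x1 + f*x2 + g*x3 + h*x4)) (x1*f - x2*e + x3*h - x4*g)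
          (x1*g - x2*h - x3*e + x4*f) (x1*h + x2*g - x3*f - x4*e)).
apply: (mulfI (mulf_neq0 m0 m0)).
rewrite -mulrA -HS.
subst a b c d m.
ring.
Qed.
End IntPart.

Lemma res2 (a : nat) : exists (e : int) (t j : nat),
  (2 %| (Posz a - e)%R)%Z /\ (e ^+ 2)%R = Posz t /\ t <= 1 /\ a ^ 2 = 4 * j + t.
Proof.
have [k [r [-> Hr]]] : exists k r, a = 2 * k + r /\ r < 2.
  by exists (a %/ 2), (a %% 2); split; [rewrite mulnC -divn_eq | rewrite ltn_mod].
case: r Hr => [|[|//]] _.
- exists 0%R, 0, (k^2); split; last by split => //; split => //; ring.
  rewrite subr0 PoszD PoszM addr0; apply: dvdz_mulr; exact: dvdzz.
- exists 1%R, 1, (k^2 + k); split; last by split => //; split => //; ring.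
  rewrite PoszD addrK PoszM; apply: dvdz_mulr; exact: dvdzz.
Qed.

Lemma res3 (a : nat) : exists (e : int) (t j : nat),
  (3 %| (Posz a - e)%R)%Z /\ (e ^+ 2)%R = Posz t /\ t <= 1 /\ a ^ 2 = 3 * j + t /\
  (t = 0 -> exists k, a ^ 2 = 9 * k).
Proof.
have [k [r [-> Hr]]] : exists k r, a = 3 * k + r /\ r < 3.
  by exists (a %/ 3), (a %% 3); split; [rewrite mulnC -divn_eq | rewrite ltn_mod].
case: r Hr => [|[|[|//]]] _.
- exists 0%R, 0, (3 * k^2); split; last first.
    by split => //; split => //; split; [ring | exists (k^2); ring].
  rewrite subr0 PoszD PoszM addr0; apply: dvdz_mulr; exact: dvdzz.
- exists 1%R, 1, (3 * k^2 + 2 * k); split; last by split => //; split => //; split => //; ring.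
  rewrite PoszD addrK PoszM; apply: dvdz_mulr; exact: dvdzz.
- exists (-1)%R, 1, (3 * k^2 + 4 * k + 1); split; last first.
    by split; [rewrite sqrrN expr1n | split => //; split => //; ring].
  by apply/dvdzP; exists (Posz k + 1)%R; rewrite PoszD (PoszM 3 k); ring.
Qed.

Lemma sum_nat_int (a b c d n : nat) : a^2 + b^2 + c^2 + d^2 = n ->
  ((Posz a)^+2 + (Posz b)^+2 + (Posz c)^+2 + (Posz d)^+2)%R = Posz n.
Proof. by move=> <-; rewrite !PoszD !natz_sq'. Qed.

Lemma red2 (p a b c d : nat) : odd p -> a^2 + b^2 + c^2 + d^2 = 2 * p -> sum4 p.
Proof.
move=> op H.
have [ea [ta [ja [da [sa [ta1 Ea]]]]]] := res2 a.
have [eb [tb [jb [db [sb [tb1 Eb]]]]]] := res2 b.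
have [ec [tc [jc [dc [sc [tc1 Ec]]]]]] := res2 c.
have [ed [td [jd [dd [sd [td1 Ed]]]]]] := res2 d.
have T2 : ta + tb + tc + td = 2. { move: (odd_double_half p); rewrite op -addnn => Hp. rewrite Ea Eb Ec Ed in H. clear -Hp H ta1 tb1 tc1 td1. lia. }
apply: (@reduce4 (Posz 2) p (Posz a) (Posz b) (Posz c) (Posz d) ea eb ec ed).
- by [].
- by rewrite (@sum_nat_int a b c d _ H) PoszM.
- by rewrite sa sb sc sd -!PoszD T2.
all: by [].
Qed.

Lemma red3 (p a b c d : nat) : ~~ (3 %| p) -> a^2 + b^2 + c^2 + d^2 = 3 * p -> sum4 p.
Proof.
move=> np H.
have [ea [ta [ja [da [sa [ta1 [Ea Za]]]]]]] := res3 a.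
have [eb [tb [jb [db [sb [tb1 [Eb Zb]]]]]]] := res3 b.
have [ec [tc [jc [dc [sc [tc1 [Ec Zc]]]]]]] := res3 c.
have [ed [td [jd [dd [sd [td1 [Ed Zd]]]]]]] := res3 d.
have [T0|T3] : (ta + tb + tc + td = 0) \/ (ta + tb + tc + td = 3).
  rewrite Ea Eb Ec Ed in H. clear -H ta1 tb1 tc1 td1. lia.
- have [ka Ka] : exists k, a ^ 2 = 9 * k by apply: Za; clear -T0; lia.
  have [kb Kb] : exists k, b ^ 2 = 9 * k by apply: Zb; clear -T0; lia.
  have [kc Kc] : exists k, c ^ 2 = 9 * k by apply: Zc; clear -T0; lia.
  have [kd Kd] : exists k, d ^ 2 = 9 * k by apply: Zd; clear -T0; lia.
  rewrite Ka Kb Kc Kd in H. move: np; clear -H. lia.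
apply: (@reduce4 (Posz 3) p (Posz a) (Posz b) (Posz c) (Posz d) ea eb ec ed).
- by [].
- by rewrite (@sum_nat_int a b c d _ H) PoszM.
- by rewrite sa sb sc sd -!PoszD T3.
all: by [].
Qed.

Lemma sq_mod_inj p x y : prime p -> x + x < p -> y + y < p -> x^2 = y^2 %[mod p] -> x = y.
Proof.
move=> pp; wlog le_yx : x y / y <= x.
  move=> W px py E; case: (leqP y x) => h; first exact: W.
  symmetry; apply: W => //; try exact: ltnW; by rewrite E.
move=> px py /eqP; rewrite eqn_mod_dvd; last by rewrite leq_exp2r.
rewrite subn_sqr Euclid_dvdM // => /orP[] H.
- case: (posnP (x - y)) => [|h]; first by lia.
  have := dvdn_leq h H; lia.
- case: (posnP (x + y)) => [|h]; first by lia.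
  have := dvdn_leq h H; lia.
Qed.

Lemma ltn_pred_sub p k : 0 < p -> p.-1 - k < p.
Proof. lia. Qed.

Lemma minus_one_sq p : prime p -> odd p -> exists x y, p %| x^2 + y^2 + 1.
Proof.
move=> pp op.
have p0 := prime_gt0 pp.
set h := p.+1./2.
have hh : h + h = p.+1 by move: (odd_double_half p.+1); rewrite /= op /= -addnn.
pose F (u : 'I_h + 'I_h) : 'I_p :=
  match u with
  | inl x => Ordinal (ltn_pmod (x ^ 2) p0)
  | inr y => Ordinal (@ltn_pred_sub p (y ^ 2 %% p) p0)
  end.
have : ~~ injectiveb F.
  apply/negP => /injectiveP inj; have := leq_card F inj.
  rewrite card_sum !card_ord; lia.
case/injectivePn => u [v nuv Fuv].

case: u v nuv Fuv => [x|x] [y|y] nxy /(congr1 val) /= E.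
- exfalso; move/eqP: nxy; apply; congr inl; apply: ord_inj.
  apply: (@sq_mod_inj p _ _ pp) => //; have := ltn_ord x; have := ltn_ord y; lia.
- exists x, y.
  have hx := ltn_pmod (x ^ 2) p0; have hy := ltn_pmod (y ^ 2) p0.
  move: (divn_eq (x^2) p) (divn_eq (y^2) p) => ex ey.
  apply/dvdnP; exists (x ^ 2 %/ p + y ^ 2 %/ p + 1); lia.
- exists y, x.
  have hx := ltn_pmod (x ^ 2) p0; have hy := ltn_pmod (y ^ 2) p0.
  move: (divn_eq (x^2) p) (divn_eq (y^2) p) => ex ey.
  apply/dvdnP; exists (x ^ 2 %/ p + y ^ 2 %/ p + 1); lia.
- exfalso; move/eqP: nxy; apply; congr inr; apply: ord_inj.
  have hx := ltn_pmod (x ^ 2) p0; have hy := ltn_pmod (y ^ 2) p0.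
  apply: (@sq_mod_inj p _ _ pp); try (have := ltn_ord x; have := ltn_ord y; lia).
Qed.

Lemma isqrt n : exists k, k^2 <= n < k.+1 ^2.
Proof.
elim: n => [|n [k /andP[h1 h2]]]; first by exists 0.
case: (ltnP n.+1 (k.+1 ^ 2)) => h.
- by exists k; apply/andP; split => //; lia.
- by exists k.+1; apply/andP; split => //; nia.
Qed.

Lemma nat_mod_dvdz (p m n : nat) : m %% p = n %% p -> (Posz p %| (Posz m - Posz n)%R)%Z.
Proof. by move=> E; rewrite -eqz_mod_dvd !modz_nat E. Qed.

Section TA.
Local Open Scope ring_scope.
Lemma thue_alg (p x y w s t A B C D : int) :
  (1 + x^+2 + y^+2 = w * p)%R -> (C + x*A + y*B = s * p)%R ->
  (D + y*A + (p - 1) * x * B = t * p)%R ->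
  (p %| (A^+2 + B^+2 + C^+2 + D^+2)%R)%Z.
Proof.
move=> Hw HC HD.
have {}HC : C = (s* p - x*A - y*B)%R by rewrite -HC; ring.
have {}HD : D = (t* p - y*A - (p - 1)*x*B)%R by rewrite -HD; ring.
subst C D.
apply/dvdzP; exists ((A^+2+B^+2)*w + p*s^+2 - 2*s*(x*A+y*B) + p*(t - x*B)^+2
                     + 2*(t-x*B)*(x*B - y*A))%R.
apply/eqP; rewrite -subr_eq0; apply/eqP.
transitivity ((A^+2+B^+2) * ((1 + x^+2 + y^+2) - w * p))%R; first ring.
by rewrite Hw subrr mulr0.
Qed.
End TA.

Lemma dist_le (u v k : nat) : u <= k -> v <= k -> `|(Posz u - Posz v)%R|%N <= k.
Proof. by case: (leqP u v) => h; [rewrite distnEr | rewrite distnEl ?(ltnW h)]; lia. Qed.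

Lemma thue p x y : prime p -> p %| x^2 + y^2 + 1 ->
  exists a b c d m, a^2 + b^2 + c^2 + d^2 = m * p /\ 0 < m < 4.
Proof.
move=> pp /dvdnP [w Hw].
have p0 := prime_gt0 pp; have p1 := prime_gt1 pp.
have [k /andP[k1 k2]] := isqrt p.
have kp : k^2 < p.
  rewrite ltn_neqAle k1 andbT; apply/negP => /eqP kk.
  have : k %| p by rewrite -kk dvdn_mulr.
  case/primeP: pp => _ H /H /orP[] /eqP Hk; subst; nia.
pose T := ('I_k.+1 * 'I_k.+1 * 'I_k.+1 * 'I_k.+1)%type.
pose F (q : T) : 'I_p * 'I_p :=
  let: (a, b, c, d) := q in
  (Ordinal (ltn_pmod (c + x * a + y * b) p0),
   Ordinal (ltn_pmod (d + y * a + p.-1 * x * b) p0)).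
have : ~~ injectiveb F.
  apply/negP => /injectiveP inj; have := leq_card F inj.
  rewrite !card_prod !card_ord; nia.
case/injectivePn => [[[[a1 b1] c1] d1]] [[[[a2 b2] c2] d2]] nq E.
have E1 := congr1 (fun w => val w.1) E; have E2 := congr1 (fun w => val w.2) E.
simpl in E1, E2.
have /dvdzP [s Hs] := @nat_mod_dvdz p _ _ E1.
have /dvdzP [t Ht] := @nat_mod_dvdz p _ _ E2.
have pm1 : Posz p.-1 = (Posz p - 1)%R by rewrite -subn1 -subzn.
have key := @thue_alg (Posz p) (Posz x) (Posz y) (Posz w) s t
  (Posz a1 - Posz a2)%R (Posz b1 - Posz b2)%R (Posz c1 - Posz c2)%R (Posz d1 - Posz d2)%R.
have {key} key : (Posz p %| ((Posz a1 - Posz a2)^+2 + (Posz b1 - Posz b2)^+2 +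
   (Posz c1 - Posz c2)^+2 + (Posz d1 - Posz d2)^+2)%R)%Z.
  apply: key.
  - by rewrite -PoszM -Hw !PoszD !natz_sq'; ring.
  - by rewrite -Hs !PoszD !PoszM; ring.
  - by rewrite -Ht -pm1 !PoszD !PoszM; ring.
set a := `|(Posz a1 - Posz a2)%R|%N; set b := `|(Posz b1 - Posz b2)%R|%N.
set c := `|(Posz c1 - Posz c2)%R|%N; set d := `|(Posz d1 - Posz d2)%R|%N.
have hS : Posz (a^2 + b^2 + c^2 + d^2) = ((Posz a1 - Posz a2)^+2 + (Posz b1 - Posz b2)^+2 +
   (Posz c1 - Posz c2)^+2 + (Posz d1 - Posz d2)^+2)%R by rewrite !PoszD !natz_sq.
move: key; rewrite -hS dvdzE /= => pS.
have sq (u : nat) : u <= k -> u^2 <= k^2 by move=> h; rewrite leq_exp2r.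
have ha : a <= k := @dist_le a1 a2 k (ltn_ord a1) (ltn_ord a2).
have hb : b <= k := @dist_le b1 b2 k (ltn_ord b1) (ltn_ord b2).
have hc : c <= k := @dist_le c1 c2 k (ltn_ord c1) (ltn_ord c2).
have hd : d <= k := @dist_le d1 d2 k (ltn_ord d1) (ltn_ord d2).
move: (sq _ ha) (sq _ hb) (sq _ hc) (sq _ hd) => sa sb sc sd.
have S0 : 0 < a^2 + b^2 + c^2 + d^2.
  rewrite lt0n; apply/negP => S0.
  move: S0; rewrite /a /b /c /d !addn_eq0 !expn_eq0 /= !andbT !distn_eq0.
  move=> /andP[/andP[/andP[/eqP e1 /eqP e2] /eqP e3] /eqP e4].
  move/negP: nq; apply; apply/eqP.
  by congr (_, _, _, _); apply: ord_inj.
have Sle : a^2 + b^2 + c^2 + d^2 < 4 * p by clear - sa sb sc sd kp; lia.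
exists a, b, c, d, ((a^2 + b^2 + c^2 + d^2) %/ p).
rewrite divnK //; split => //.
move: (divnK pS) S0 Sle; move: (a^2 + b^2 + c^2 + d^2) (_ %/ p) => S m.
clear; move=> hm S0 Sle; apply/andP; split; nia.
Qed.

Lemma sum4_prime p : prime p -> sum4 p.
Proof.
move=> pp.
case: (even_prime pp) => [->|op]; first by exists 1, 1, 0, 0.
case: (eqVneq p 3) => [->|p3]; first by exists 1, 1, 1, 0.
have [x [y hxy]] := @minus_one_sq p pp op.
have [a [b [c [d [m [H /andP[m0 m4]]]]]]] := @thue p x y pp hxy.
case: m H m0 m4 => [|[|[|[|//]]]] H // _ _.
- by exists a, b, c, d; rewrite H mul1n.
- exact: (@red2 p a b c d op H).
- apply: (@red3 p a b c d _ H).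
  by rewrite dvdn_prime2 // eq_sym.
Qed.

Lemma sum4_all n : sum4 n.
Proof.
elim/ltn_ind: n => n IH.
case: n IH => [|[|n]] IH; first by exists 0, 0, 0, 0.
  by exists 1, 0, 0, 0.
have n1 : 1 < n.+2 by [].
have e : n.+2 = pdiv n.+2 * (n.+2 %/ pdiv n.+2) by rewrite mulnC divnK // pdiv_dvd.
rewrite {1}e.
apply: sum4M; first exact: (@sum4_prime _ (pdiv_prime n1)).
apply: IH; apply: ltn_Pdiv => //; exact: prime_gt1 (pdiv_prime n1).
Qed.


Fixpoint nval (B : nat) (l : seq nat) : nat :=
  if l is d :: l' then d + B * nval B l' else 0.

Lemma digit_cons0 B d v : d < B -> digit B (d + B * v) 0 = d.
Proof.
move=> dB; rewrite /digit expn0 divn1 addnC mulnC modnMDl modn_small //.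
Qed.

Lemma digit_consS B d v i : d < B -> digit B (d + B * v) i.+1 = digit B v i.
Proof.
move=> dB; have B0 : 0 < B by lia.
by rewrite /digit expnS divnMA addnC mulnC divnMDl // (divn_small dB) addn0.
Qed.

Lemma nval_lt B l : 0 < B -> all (fun d => d < B) l -> nval B l < B ^ size l.
Proof.
move=> B0; elim: l => [|d l IH] /=; first by [].
case/andP => dB /IH h; rewrite expnS; nia.
Qed.

Lemma sum_ext B x N M : 1 < B -> x < B ^ N -> N <= M ->
  \sum_(i < M) digit B x i ^ 2 = \sum_(i < N) digit B x i ^ 2.
Proof.
move=> B1 xN NM.
rewrite -!(big_mkord xpredT (fun i => digit B x i ^ 2)).
rewrite (big_cat_nat (leq0n N) NM) /= [X in _ + X]big1_seq ?addn0 //.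
move=> i /andP[_]; rewrite mem_index_iota => /andP[Ni _].
rewrite /digit divn_small ?mod0n //. apply: (leq_trans xN). by rewrite leq_exp2l.
Qed.

Lemma HB_sum B x n : 1 < B -> x < B ^ n -> HB B x = \sum_(i < n) digit B x i ^ 2.
Proof.
move=> B1 xn; rewrite /HB.
case: (leqP x n) => h.
- by rewrite (@sum_ext B x x n B1 (ltn_expl x B1) h).
- by rewrite (@sum_ext B x n x B1 xn (ltnW h)).
Qed.

Lemma sum_digits_nval B l : 1 < B -> all (fun d => d < B) l ->
  \sum_(i < size l) digit B (nval B l) i ^ 2 = sumn [seq d ^ 2 | d <- l].
Proof.
move=> B1; elim: l => [|d l IH] /=; first by rewrite big_ord0.
case/andP => dB /IH h.
rewrite big_ord_recl digit_cons0 //.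
under eq_bigr => i _ do rewrite /bump /= digit_consS //.
by rewrite h.
Qed.

Lemma HB_nval B l : 1 < B -> all (fun d => d < B) l ->
  HB B (nval B l) = sumn [seq d ^ 2 | d <- l].
Proof.
move=> B1 al; rewrite (@HB_sum B _ (size l)) //; last by apply: nval_lt => //; lia.
exact: sum_digits_nval.
Qed.

Lemma HB_le B x L : 1 < B -> x < B ^ L -> HB B x <= L * (B - 1) ^ 2.
Proof.
move=> B1 xL; rewrite (@HB_sum B x L B1 xL).
apply: (@leq_trans (\sum_(i < L) (B - 1) ^ 2)).
  apply: leq_sum => i _.
  have : digit B x i < B by apply: ltn_pmod; lia.
  by move=> h; rewrite leq_exp2r //; lia.
by rewrite sum_nat_const card_ord.
Qed.

Lemma HB1 B : 1 < B -> HB B 1 = 1.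
Proof.
move=> B1; have := @HB_nval B [:: 1] B1; rewrite /= muln0 addn0 => -> //.
by rewrite B1.
Qed.

Lemma HB0 B : HB B 0 = 0.
Proof. by rewrite /HB big_ord0. Qed.

Theorem lemma2p6 (B eta g0 g1 : nat) :
  2 <= B ->
  is_gamma B eta g0 ->
  is_gamma B eta.+1 g1 ->
  HB B g1 <= g0 + 4 * (B - 1) ^ 2.
Proof.
move=> B2 [[[g0pos _] [g0it g0min]] _] [[[g1pos _] [g1it g1nz]] g1min].
have B1 : 1 < B by [].
have B0 : 0 < B by lia.
case: eta g0it g0min g1it g1nz g1min => [|e] g0it g0min g1it g1nz g1min.
- have -> : g0 = 1 by [].
  have HBB : HB B B = 1.
    have := @HB_nval B [:: 0; 1] B1; rewrite /= !muln0 !addn0 muln1 add0n => -> //.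
    by rewrite B0 B1.
  have hB : has_height B B 1.
    split; first by split => //; exists 1.
    split; first by [].
    by move=> [|m] // _ /=; lia.
  have g1B := g1min B hB.
  have g1lt : g1 < B ^ 2 by rewrite expnS expn1; nia.
  have := @HB_le B g1 2 B1 g1lt; lia.
set s := B - 1.
have hL := @trunc_log_ltn B g1 B1.
have hL' := @trunc_logP B g1 B1 g1pos.
set T := trunc_log B g1 in hL hL'.
have hz := @HB_le B g1 T.+1 B1 hL.
rewrite leqNgt; apply/negP => hc.
have s2pos : 0 < s ^ 2 by rewrite expn_gt0; lia.
have hq := divn_eq g0 (s ^ 2).
have hr := ltn_pmod g0 s2pos.
set q := g0 %/ s ^ 2 in hq; set r := g0 %% s ^ 2 in hq hr.
have [a [b [c [d hr4]]]] := sum4_all r.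
have lt (u : nat) : u ^ 2 < s ^ 2 -> u < B by rewrite ltn_exp2r //; lia.
have ha : a < B by apply: lt; lia.
have hb : b < B by apply: lt; lia.
have hc' : c < B by apply: lt; lia.
have hd : d < B by apply: lt; lia.
set l := [:: a; b; c; d] ++ nseq q s.
have al : all (fun d => d < B) l.
  rewrite all_cat; apply/andP; split; first by rewrite /= ha hb hc' hd.
  by rewrite all_nseq; apply/orP; right; lia.
set y := nval B l.
have Hy : HB B y = g0.
  rewrite /y HB_nval // map_cat sumn_cat map_nseq sumn_nseq /=; lia.
have qT : q + 4 <= T.
  have : (q + 4) * s ^ 2 < T.+1 * s ^ 2.
    move: hq hc hz; rewrite mulnDl; move: (HB B g1) (q * s ^ 2) (s ^ 2) => z Q S.
    clear; lia.
  by rewrite ltn_pmul2r //; lia.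
have ylt : y < g1.
  apply: (leq_trans (@nval_lt B l B0 al)); apply: leq_trans hL'.
  rewrite leq_exp2l // size_cat size_nseq /=; lia.
have hy : has_height B y e.+2.
  split.
    split; last by exists e.+2; rewrite /HBiter iterSr Hy.
    rewrite lt0n; apply/negP => /eqP y0; move: Hy; rewrite y0 HB0; lia.
  split; first by rewrite /HBiter iterSr Hy.
  case=> [|m] hm.
  + move=> /= y1; move: Hy; rewrite y1 HB1 // => g01.
    by apply: (g0min 0) => //.
  + rewrite /HBiter iterSr Hy; exact: g0min.
have := g1min y hy; lia.
Qed.
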